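(* Let $\Omega\subseteq\mathbb{R}^n$ be open and $u:\Omega\to\mathbb{R}^N$ continuous. (1) Let $F:\Omega\times\mathbb{R}^N\times\mathbb{R}^{N\times n}\times(\mathbb{R}^N\otimes\mathbb{R}^{n\times n}_s)\to\mathbb{R}^N$ be locally bounded. Then $u$ is a contact solution of $F(\cdot,u,Du,D^2u)=0$ on $\Omega$ if and only if for every $x\in\Omega$, $\xi\in\mathbb{S}^{N-1}$ and $(P,\mathbf{X})\in J^{2,\xi}u(x)$ one has $\xi^*F(x,u(x),P,\mathbf{X})\ge0$. (2) Let $F:\Omega\times\mathbb{R}^N\times\mathbb{R}^{N\times n}\to\mathbb{R}^N$ be locally bounded. Then $u$ is a contact solution of $F(\cdot,u,Du)=0$ on $\Omega$ if and only if for every $x\in\Omega$, $\xi\in\mathbb{S}^{N-1}$ and $P\in J^{1,\xi}u(x)$ one has $\xi^*F(x,u(x),P)\ge0$. If moreover $F$ is continuous, then in both characterisations $\xi^*F$ may be replaced by $\xi^\top F$.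
   Context: $\mathbb{R}^N\otimes\mathbb{R}^{n\times n}_s$: arrays $\mathbf{X}=(\mathbf{X}_{\alpha ij})$ symmetric in $i,j$; $\mathbf{X}:z\otimes z$ has components $\sum_{ij}\mathbf{X}_{\alpha ij}z_iz_j$. For $a,b\in\mathbb{R}^N$, $a\vee b:=\frac12(a\otimes b+b\otimes a)$; matrix inequalities in the sense of quadratic forms. Contact jets: $J^{1,\xi}u(x)$ is the set of $P\in\mathbb{R}^{N\times n}$ for which there is a continuous $T:\mathbb{R}^n\setminus\{0\}\to\mathbb{R}^{N\times N}_s$ with $|T(y)|\to0$ as $y\to0$ and $\xi\vee[u(z)-u(x)-P(z-x)]\le|z-x|T(z-x)$ for $z\ne x$ near $x$; $J^{2,\xi}u(x)$ is the set of $(P,\mathbf{X})$ with such a $T$ and $\xi\vee[u(z)-u(x)-P(z-x)-\frac12\mathbf{X}:(z-x)\otimes(z-x)]\le|z-x|^2T(z-x)$ for $z\ne x$ near $x$. Closures: $\bar J^{1,\xi}u(x)$ is the set of $P$ for which there are $\xi_m\in\mathbb{S}^{N-1}$, $x_m\in\Omega$, $P_m\in J^{1,\xi_m}u(x_m)$ with $(\xi_m,x_m,P_m)\to(\xi,x,P)$; $\bar J^{2,\xi}u(x)$ is defined analogously with $(P_m,\mathbf{X}_m)\in J^{2,\xi_m}u(x_m)$ converging to $(P,\mathbf{X})$. $\xi$-envelope: $\xi^*F$ is the upper semicontinuous envelope of $\xi^\top F$, i.e. $\xi^*F(p):=\limsup_{\varepsilon\to0}\sup\{\xi^\top F(q):|p-q|\le\varepsilon\}$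 where $p,q$ denote the full argument tuples. Contact solutions: $u$ is a contact solution of $F(\cdot,u,Du,D^2u)=0$ if for all $x\in\Omega$, $\xi\in\mathbb{S}^{N-1}$, $(P,\mathbf{X})\in\bar J^{2,\xi}u(x)$ we have $\xi^*F(x,u(x),P,\mathbf{X})\ge0$; $u$ is a contact solution of $F(\cdot,u,Du)=0$ if for all $x,\xi$ and $P\in\bar J^{1,\xi}u(x)$ we have $\xi^*F(x,u(x),P)\ge0$. *)

(* Defs.v *)
From HB Require Import structures.
From mathcomp Require Import all_boot all_order all_algebra.
From mathcomp Require Import all_classical all_reals ereal.
Set Implicit Arguments. Unset Strict Implicit. Unset Printing Implicit Defensive.
Import Order.TTheory GRing.Theory Num.Theory.
Local Open Scope ring_scope.

Section Defs.
Variables (R : realType) (n N : nat).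

Definition vecn := 'I_n -> R.
Definition vecN := 'I_N -> R.
Definition matNn := 'I_N -> 'I_n -> R.
Definition tenN := 'I_N -> 'I_n -> 'I_n -> R.
Definition matNN := 'I_N -> 'I_N -> R.

Definition sqv {k} (v : 'I_k -> R) := \sum_(i < k) v i ^+ 2.
Definition sqm {k l} (M : 'I_k -> 'I_l -> R) := \sum_(i < k) \sum_(j < l) M i j ^+ 2.
Definition sqt (X : tenN) := \sum_(a < N) \sum_(i < n) \sum_(j < n) X a i j ^+ 2.
Definition nrmv {k} (v : 'I_k -> R) := Num.sqrt (sqv v).
Definition nrmm {k l} (M : 'I_k -> 'I_l -> R) := Num.sqrt (sqm M).
Definition nrmt (X : tenN) := Num.sqrt (sqt X).

Definition vsub {k} (v w : 'I_k -> R) : 'I_k -> R := fun i => v i - w i.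
Definition msub {k l} (M M' : 'I_k -> 'I_l -> R) : 'I_k -> 'I_l -> R :=
  fun i j => M i j - M' i j.
Definition tsub (X Y : tenN) : tenN := fun a i j => X a i j - Y a i j.
Definition dot {k} (v w : 'I_k -> R) := \sum_(i < k) v i * w i.

Definition Papp (P : matNn) (z : vecn) : vecN := fun a => \sum_(j < n) P a j * z j.
Definition Xcol (X : tenN) (z : vecn) : vecN :=
  fun a => \sum_(i < n) \sum_(j < n) X a i j * z i * z j.
Definition symX (X : tenN) := forall a i j, X a i j = X a j i.
Definition symNN (M : matNN) := forall a b, M a b = M b a.

Definition vee (a b : vecN) : matNN := fun i j => (a i * b j + b i * a j) / 2.
Definition qf (M : matNN) (eta : vecN) := \sum_(a < N) \sum_(b < N) M a b * eta a * eta b.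
Definition mle (M M' : matNN) := forall eta : vecN, qf M eta <= qf M' eta.
Definition mscale (c : R) (M : matNN) : matNN := fun a b => c * M a b.

Definition unit_sphere (xi : vecN) := nrmv xi = 1.

Definition open_set (Om : set vecn) :=
  forall x, Om x -> exists r, 0 < r /\ forall y, nrmv (vsub y x) < r -> Om y.
Definition cont_on (Om : set vecn) (u : vecn -> vecN) :=
  forall x, Om x -> forall e, 0 < e -> exists d, 0 < d /\
    forall y, Om y -> nrmv (vsub y x) < d -> nrmv (vsub (u y) (u x)) < e.

Definition admissible_T (T : vecn -> matNN) :=
  (forall y, symNN (T y)) /\
  (forall y, y <> (fun _ => 0) -> forall e, 0 < e -> exists d, 0 < d /\
      forall y', y' <> (fun _ => 0) -> nrmv (vsub y' y) < d ->
        nrmm (msub (T y') (T y)) < e) /\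
  (forall e, 0 < e -> exists d, 0 < d /\
      forall y, y <> (fun _ => 0) -> nrmv y < d -> nrmm (T y) < e).

Definition J1 (Om : set vecn) (u : vecn -> vecN) (xi : vecN) (x : vecn) (P : matNn) :=
  exists T : vecn -> matNN, admissible_T T /\
  exists d, 0 < d /\ forall z, Om z -> z <> x -> nrmv (vsub z x) < d ->
    mle (vee xi (vsub (vsub (u z) (u x)) (Papp P (vsub z x))))
        (mscale (nrmv (vsub z x)) (T (vsub z x))).

Definition J2 (Om : set vecn) (u : vecn -> vecN) (xi : vecN) (x : vecn)
    (P : matNn) (X : tenN) :=
  symX X /\
  exists T : vecn -> matNN, admissible_T T /\
  exists d, 0 < d /\ forall z, Om z -> z <> x -> nrmv (vsub z x) < d ->
    mle (vee xi (vsub (vsub (vsub (u z) (u x)) (Papp P (vsub z x)))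
                      (fun a => Xcol X (vsub z x) a / 2)))
        (mscale (nrmv (vsub z x) ^+ 2) (T (vsub z x))).

Definition cvgv {k} (s : nat -> 'I_k -> R) (l : 'I_k -> R) :=
  forall e, 0 < e -> exists M, forall m, (M <= m)%N -> nrmv (vsub (s m) l) < e.
Definition cvgm {k l} (s : nat -> 'I_k -> 'I_l -> R) (L : 'I_k -> 'I_l -> R) :=
  forall e, 0 < e -> exists M, forall m, (M <= m)%N -> nrmm (msub (s m) L) < e.
Definition cvgt (s : nat -> tenN) (L : tenN) :=
  forall e, 0 < e -> exists M, forall m, (M <= m)%N -> nrmt (tsub (s m) L) < e.

Definition J1bar (Om : set vecn) (u : vecn -> vecN) (xi : vecN) (x : vecn) (P : matNn) :=
  exists (xis : nat -> vecN) (xs : nat -> vecn) (Ps : nat -> matNn),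
    (forall m, unit_sphere (xis m) /\ Om (xs m) /\ J1 Om u (xis m) (xs m) (Ps m)) /\
    cvgv xis xi /\ cvgv xs x /\ cvgm Ps P.

Definition J2bar (Om : set vecn) (u : vecn -> vecN) (xi : vecN) (x : vecn)
    (P : matNn) (X : tenN) :=
  exists (xis : nat -> vecN) (xs : nat -> vecn) (Ps : nat -> matNn) (Xs : nat -> tenN),
    (forall m, unit_sphere (xis m) /\ Om (xs m) /\ J2 Om u (xis m) (xs m) (Ps m) (Xs m)) /\
    cvgv xis xi /\ cvgv xs x /\ cvgm Ps P /\ cvgt Xs X.

Definition dist2 (x : vecn) (r : vecN) (P : matNn) (X : tenN)
    (y : vecn) (s : vecN) (Q : matNn) (Y : tenN) :=
  Num.sqrt (sqv (vsub x y) + sqv (vsub r s) + sqm (msub P Q) + sqt (tsub X Y)).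
Definition dist1 (x : vecn) (r : vecN) (P : matNn) (y : vecn) (s : vecN) (Q : matNn) :=
  Num.sqrt (sqv (vsub x y) + sqv (vsub r s) + sqm (msub P Q)).

Definition F2type := vecn -> vecN -> matNn -> tenN -> vecN.
Definition F1type := vecn -> vecN -> matNn -> vecN.

(* xi-envelope: limsup_{eps->0} sup { xi^T F(q) : |p - q| <= eps, q in dom F }.
   The inner sup is nondecreasing in eps, so the limsup is the inf over eps > 0. *)
Definition env2 (Om : set vecn) (F : F2type) (xi : vecN)
    (x : vecn) (r : vecN) (P : matNn) (X : tenN) : \bar R :=
  ereal_inf [set ereal_sup [set z | exists y s Q Y, Om y /\ symX Y /\
                 dist2 x r P X y s Q Y <= eps /\ z = (dot xi (F y s Q Y))%:E]
            | eps in [set eps : R | 0 < eps]].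

Definition env1 (Om : set vecn) (F : F1type) (xi : vecN)
    (x : vecn) (r : vecN) (P : matNn) : \bar R :=
  ereal_inf [set ereal_sup [set z | exists y s Q, Om y /\
                 dist1 x r P y s Q <= eps /\ z = (dot xi (F y s Q))%:E]
            | eps in [set eps : R | 0 < eps]].

Definition loc_bdd2 (Om : set vecn) (F : F2type) :=
  forall x r P X, Om x -> symX X -> exists d M, 0 < d /\
    forall y s Q Y, Om y -> symX Y -> dist2 x r P X y s Q Y < d -> nrmv (F y s Q Y) <= M.
Definition loc_bdd1 (Om : set vecn) (F : F1type) :=
  forall x r P, Om x -> exists d M, 0 < d /\
    forall y s Q, Om y -> dist1 x r P y s Q < d -> nrmv (F y s Q) <= M.

Definition cont2 (Om : set vecn) (F : F2type) :=
  forall x r P X, Om x -> symX X -> forall e, 0 < e -> exists d, 0 < d /\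
    forall y s Q Y, Om y -> symX Y -> dist2 x r P X y s Q Y < d ->
      nrmv (vsub (F y s Q Y) (F x r P X)) < e.
Definition cont1 (Om : set vecn) (F : F1type) :=
  forall x r P, Om x -> forall e, 0 < e -> exists d, 0 < d /\
    forall y s Q, Om y -> dist1 x r P y s Q < d ->
      nrmv (vsub (F y s Q) (F x r P)) < e.

Definition contact_sol2 (Om : set vecn) (u : vecn -> vecN) (F : F2type) :=
  forall x xi P X, Om x -> unit_sphere xi -> J2bar Om u xi x P X ->
    (0 <= env2 Om F xi x (u x) P X)%E.
Definition contact_sol1 (Om : set vecn) (u : vecn -> vecN) (F : F1type) :=
  forall x xi P, Om x -> unit_sphere xi -> J1bar Om u xi x P ->
    (0 <= env1 Om F xi x (u x) P)%E.

End Defs.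

(* Main.v *)
Require Import Defs.
From HB Require Import structures.
From mathcomp Require Import all_boot all_order all_algebra.
From mathcomp Require Import all_classical all_reals ereal.
From mathcomp Require Import ring lra.
Import Order.TTheory GRing.Theory Num.Theory.
Set Implicit Arguments. Unset Strict Implicit. Unset Printing Implicit Defensive.
Local Open Scope ring_scope.

Section Aux.
Variable R : realType.

Lemma le_sum1 (I : finType) (f : I -> R) i :
  (forall j, 0 <= f j) -> f i <= \sum_j f j.
Proof.
move=> H; rewrite (bigD1 i) //= lerDl; apply: sumr_ge0 => j _; exact: H.
Qed.

Lemma sqv_ge0 k (v : 'I_k -> R) : 0 <= sqv v.
Proof. by apply: sumr_ge0 => i _; exact: sqr_ge0. Qed.
Lemma sqm_ge0 k l (M : 'I_k -> 'I_l -> R) : 0 <= sqm M.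
Proof. by apply: sumr_ge0 => i _; apply: sumr_ge0 => j _; exact: sqr_ge0. Qed.
Lemma sqt_ge0 n N (X : tenN R n N) : 0 <= sqt X.
Proof.
by apply: sumr_ge0 => i _; apply: sumr_ge0 => j _; apply: sumr_ge0 => l _;
  exact: sqr_ge0.
Qed.

Lemma coord_le k (v : 'I_k -> R) i : `|v i| <= nrmv v.
Proof.
rewrite /nrmv -sqrtr_sqr ler_sqrt ?sqv_ge0 // /sqv.
exact: (@le_sum1 _ (fun j => v j ^+ 2) i (fun j => sqr_ge0 _)).
Qed.

Lemma coordt_le n N (X : tenN R n N) a i j : `|X a i j| <= nrmt X.
Proof.
rewrite /nrmt -sqrtr_sqr ler_sqrt ?sqt_ge0 // /sqt.
apply: le_trans (@le_sum1 _ (fun a => \sum_(i < n) \sum_(j < n) X a i j ^+ 2) a _); last first.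
  by move=> b; apply: sumr_ge0 => i' _; apply: sumr_ge0 => j' _; exact: sqr_ge0.
apply: le_trans (@le_sum1 _ (fun i => \sum_(j < n) X a i j ^+ 2) i _); last first.
  by move=> i'; apply: sumr_ge0 => j' _; exact: sqr_ge0.
exact: (@le_sum1 _ (fun j => X a i j ^+ 2) j (fun j => sqr_ge0 _)).
Qed.

Lemma dot_bound k (a b : 'I_k -> R) : `|dot a b| <= k%:R * (nrmv a * nrmv b).
Proof.
have H : forall i, `|a i * b i| <= nrmv a * nrmv b.
  move=> i; rewrite normrM; apply: ler_pM; by [exact: normr_ge0|exact: coord_le].
apply: le_trans (ler_norm_sum _ _ _) _.
apply: le_trans (ler_sum _ (fun i _ => H i)) _.
by rewrite sumr_const card_ord mulr_natl.
Qed.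

Lemma dot_splitl k (a b c : 'I_k -> R) : dot a c = dot b c + dot (vsub a b) c.
Proof. rewrite /dot -big_split; apply: eq_bigr => i _; rewrite /vsub /=; ring. Qed.
Lemma dot_splitr k (a b c : 'I_k -> R) : dot c a = dot c b + dot c (vsub a b).
Proof. rewrite /dot -big_split; apply: eq_bigr => i _; rewrite /vsub /=; ring. Qed.

Lemma sum2_le (I : finType) (f g h : I -> R) :
  (forall i, f i <= 2 * g i + 2 * h i) ->
  \sum_i f i <= 2 * \sum_i g i + 2 * \sum_i h i.
Proof. by move=> H; rewrite !mulr_sumr -big_split /=; apply: ler_sum => i _. Qed.

Lemma sq_tri (x y z : R) : (x - z) ^+ 2 <= 2 * (x - y) ^+ 2 + 2 * (y - z) ^+ 2.
Proof.
rewrite -subr_ge0.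
have -> : 2 * (x - y) ^+ 2 + 2 * (y - z) ^+ 2 - (x - z) ^+ 2 = ((x - y) - (y - z)) ^+ 2 by ring.
exact: sqr_ge0.
Qed.

Lemma sqv_tri k (a b c : 'I_k -> R) :
  sqv (vsub a c) <= 2 * sqv (vsub a b) + 2 * sqv (vsub b c).
Proof. by apply: sum2_le => i; exact: sq_tri. Qed.
Lemma sqm_tri k l (a b c : 'I_k -> 'I_l -> R) :
  sqm (msub a c) <= 2 * sqm (msub a b) + 2 * sqm (msub b c).
Proof. by apply: sum2_le => i; apply: sum2_le => j; exact: sq_tri. Qed.
Lemma sqt_tri n N (a b c : tenN R n N) :
  sqt (tsub a c) <= 2 * sqt (tsub a b) + 2 * sqt (tsub b c).
Proof.
by apply: sum2_le => i; apply: sum2_le => j; apply: sum2_le => l; exact: sq_tri.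
Qed.

Lemma sqv_sym k (a b : 'I_k -> R) : sqv (vsub a b) = sqv (vsub b a).
Proof. by apply: eq_bigr => i _; rewrite /vsub -opprB sqrrN. Qed.
Lemma sqm_sym k l (a b : 'I_k -> 'I_l -> R) : sqm (msub a b) = sqm (msub b a).
Proof. by apply: eq_bigr => i _; apply: eq_bigr => j _; rewrite /msub -opprB sqrrN. Qed.
Lemma sqt_sym n N (a b : tenN R n N) : sqt (tsub a b) = sqt (tsub b a).
Proof.
by apply: eq_bigr => i _; apply: eq_bigr => j _; apply: eq_bigr => l _;
  rewrite /tsub -opprB sqrrN.
Qed.

Lemma sqv0 k (a : 'I_k -> R) : sqv (vsub a a) = 0.
Proof. by apply: big1 => i _; rewrite /vsub subrr exprS mul0r. Qed.
Lemma sqm0 k l (a : 'I_k -> 'I_l -> R) : sqm (msub a a) = 0.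
Proof. by apply: big1 => i _; apply: big1 => j _; rewrite /msub subrr exprS mul0r. Qed.
Lemma sqt0 n N (a : tenN R n N) : sqt (tsub a a) = 0.
Proof.
by apply: big1 => i _; apply: big1 => j _; apply: big1 => l _;
  rewrite /tsub subrr exprS mul0r.
Qed.

Lemma sqrt_quasi (Spq Sqr Spr a : R) : 0 <= Spq -> 0 <= Sqr ->
  Spr <= 2 * Spq + 2 * Sqr -> Num.sqrt Spq <= a -> Num.sqrt Sqr <= a ->
  Num.sqrt Spr <= 2 * a.
Proof.
move=> h1 h2 h3 h4 h5.
have e1 := sqr_sqrtr h1; have e2 := sqr_sqrtr h2.
have g1 := sqrtr_ge0 Spq; have g2 := sqrtr_ge0 Sqr.
have a0 : 0 <= 2 * a by lra.
rewrite -(ger0_norm a0) -sqrtr_sqr ler_sqrt; last exact: sqr_ge0.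
move: e1 e2 h4 h5 g1 g2; set s1 := Num.sqrt Spq; set s2 := Num.sqrt Sqr.
move=> e1 e2 h4 h5 g1 g2; nra.
Qed.

Lemma sq_lt (A e : R) : 0 <= A -> Num.sqrt A < e -> A < e ^+ 2.
Proof.
move=> h1 h2; have e1 := sqr_sqrtr h1; have g1 := sqrtr_ge0 A.
move: e1 h2 g1; set s := Num.sqrt A => e1 h2 g1; nra.
Qed.

Lemma sqrt_small4 (A B C D e : R) : 0 <= A -> 0 <= B -> 0 <= C -> 0 <= D ->
  Num.sqrt A < e -> Num.sqrt B < e -> Num.sqrt C < e -> Num.sqrt D < e ->
  Num.sqrt (A + B + C + D) < 2 * e.
Proof.
move=> hA hB hC hD sA sB sC sD.
have e0 : 0 < e by apply: le_lt_trans sA; exact: sqrtr_ge0.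
have := sq_lt hA sA; have := sq_lt hB sB; have := sq_lt hC sC; have := sq_lt hD sD.
move=> lD lC lB lA.
rewrite -(gtr0_norm (_ : 0 < 2 * e)); last lra.
rewrite -sqrtr_sqr ltr_sqrt; last by rewrite exprn_gt0 //; lra.
nra.
Qed.

Lemma sqrt_small3 (A B C e : R) : 0 <= A -> 0 <= B -> 0 <= C ->
  Num.sqrt A < e -> Num.sqrt B < e -> Num.sqrt C < e ->
  Num.sqrt (A + B + C) < 2 * e.
Proof.
move=> hA hB hC sA sB sC.
have e0 : 0 < e by apply: le_lt_trans sA; exact: sqrtr_ge0.
have := sq_lt hA sA; have := sq_lt hB sB; have := sq_lt hC sC.
move=> lC lB lA.
rewrite -(gtr0_norm (_ : 0 < 2 * e)); last lra.
rewrite -sqrtr_sqr ltr_sqrt; last by rewrite exprn_gt0 //; lra.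
nra.
Qed.

Lemma small_mul (k d : R) : 0 <= k -> 0 < d ->
  exists e, 0 < e /\ forall t, 0 <= t -> t < e -> k * t <= d.
Proof.
move=> k0 d0; exists (d / (k + 1)); split; first by rewrite divr_gt0 //; lra.
move=> t t0 te; have : t * (k + 1) < d by rewrite -ltr_pdivlMr //; lra.
nra.
Qed.

Lemma zero_small (y : R) : (forall e, 0 < e -> `|y| < e) -> y = 0.
Proof.
move=> H; apply/eqP; apply: contraT => y0.
have h : 0 < `|y| by rewrite normr_gt0.
by have := H _ h; rewrite ltxx.
Qed.

End Aux.

Section Gen.
Variables (R : realType) (N : nat) (T : Type).
Variables (D : set T) (dd : T -> T -> R) (G : T -> vecN R N).

Definition genv (xi : vecN R N) (p : T) : \bar R :=
  ereal_inf [set ereal_sup [set z | exists q, D q /\ dd p q <= eps /\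
                 z = (dot xi (G q))%:E]
            | eps in [set eps : R | 0 < eps]].

Lemma genv_usc xi p (xis : nat -> vecN R N) (ps : nat -> T) :
  (forall p q r a, dd p q <= a -> dd q r <= a -> dd p r <= 2 * a) ->
  (exists d M, 0 < d /\ forall q, D q -> dd p q < d -> nrmv (G q) <= M) ->
  cvgv xis xi ->
  (forall e, 0 < e -> exists K, forall m, (K <= m)%N -> dd p (ps m) <= e) ->
  (forall m, (0 <= genv (xis m) (ps m))%E) ->
  (0 <= genv xi p)%E.
Proof.
move=> tri [d [M [d0 HM]]] cxi cps Hm.
apply/ereal_infP => _ [eps eps0 <-].
apply/lee_addgt0Pr => del del0.
set r := Num.min eps (d / 2).
have r0 : 0 < r by rewrite lt_min eps0 divr_gt0.
have reps : r <= eps by rewrite ge_min lexx.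
have rd : r <= d / 2 by rewrite ge_min lexx orbT.
have del2 : 0 < del / 2 by rewrite divr_gt0.
have [e1 [e10 He1]] := small_mul (mulr_ge0 (ler0n R N) (normr_ge0 M)) del2.
have [K1 HK1] := cxi e1 e10.
have r2 : 0 < r / 2 by rewrite divr_gt0.
have [K2 HK2] := cps (r / 2) r2.
set m := maxn K1 K2.
have m1 : (K1 <= m)%N by rewrite leq_maxl.
have m2 : (K2 <= m)%N by rewrite leq_maxr.
have h0 := Hm m.
have h1 : (0 <= ereal_sup [set z | exists q, D q /\ (dd (ps m) q <= r / 2)%R /\
                 z = (dot (xis m) (G q))%:E])%E.
  move/ereal_infP: h0; apply; exists (r / 2) => //; exact: divr_gt0.
have h2 : ((- (del / 2))%:E < ereal_sup [set z | exists q, D q /\ (dd (ps m) q <= r / 2)%R /\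
                 z = (dot (xis m) (G q))%:E])%E.
  apply: lt_le_trans h1; rewrite lte_fin oppr_lt0 divr_gt0 //.
have [_ [q [Dq [dq ->]]]] := ereal_sup_gt h2.
rewrite lte_fin => hq.
have dpq : dd p q <= r by have := tri _ _ _ _ (HK2 m m2) dq; rewrite mulrC divfK.
have Gq : nrmv (G q) <= M by apply: HM => //; lra.
have hx : nrmv (vsub xi (xis m)) < e1.
  by rewrite /nrmv sqv_sym; exact: HK1.
have hb : `|dot (vsub xi (xis m)) (G q)| <= del / 2.
  apply: le_trans (dot_bound _ _) _.
  have nG : nrmv (G q) <= `|M| by apply: le_trans Gq (ler_norm _).
  have n0 : 0 <= nrmv (vsub xi (xis m)) by exact: sqrtr_ge0.
  have nG0 : 0 <= nrmv (G q) by exact: sqrtr_ge0.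
  apply: le_trans (He1 _ n0 hx).
  rewrite -mulrA; apply: ler_wpM2l => //; rewrite [X in _ <= X]mulrC.
  by apply: ler_wpM2l.
have Sq : ((dot xi (G q))%:E <= ereal_sup [set z | exists q, D q /\ (dd p q <= eps)%R /\
                 z = (dot xi (G q))%:E])%E.
  apply: ereal_sup_ubound; exists q; split => //; split => //; exact: le_trans dpq reps.
apply: (le_trans _ (leeD2r _ Sq)); rewrite -EFinD lee_fin.
rewrite (dot_splitl _ (xis m)).
move: hb; rewrite ler_norml => /andP [hb1 hb2]; lra.
Qed.

Lemma genv_cont xi p : unit_sphere xi -> D p -> dd p p = 0 ->
  (forall e, 0 < e -> exists d, 0 < d /\ forall q, D q -> dd p q < d ->
       nrmv (vsub (G q) (G p)) < e) ->
  ((0 <= genv xi p)%E <-> 0 <= dot xi (G p)).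
Proof.
move=> un Dp dpp cont; split => H.
- apply/ler_addgt0Pr => del del0.
  have [e [e0 He]] := small_mul (ler0n R N) del0.
  have [d [d0 Hd]] := cont e e0.
  have h1 : (0 <= ereal_sup [set z | exists q, D q /\ (dd p q <= d / 2)%R /\
                 z = (dot xi (G q))%:E])%E.
    move/ereal_infP: H; apply; exists (d / 2) => //; exact: divr_gt0.
  have h2 : (ereal_sup [set z | exists q, D q /\ (dd p q <= d / 2)%R /\
                 z = (dot xi (G q))%:E] <= (dot xi (G p) + del)%:E)%E.
    apply/ereal_supP => _ [q [Dq [dq ->]]]; rewrite lee_fin.
    rewrite (dot_splitr _ (G p)) lerD2l.
    have hq : nrmv (vsub (G q) (G p)) < e by apply: Hd => //; lra.
    apply: le_trans (ler_norm _) _; apply: le_trans (dot_bound _ _) _.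
    rewrite un mul1r; apply: He => //; exact: sqrtr_ge0.
  by have := le_trans h1 h2; rewrite lee_fin.
- apply/ereal_infP => _ [eps eps0 <-].
  apply: le_trans (_ : (dot xi (G p))%:E <= _)%E; first by rewrite lee_fin.
  apply: ereal_sup_ubound; exists p; split => //; split => //; rewrite dpp; exact: ltW.
Qed.

End Gen.

Section Spec.
Variables (R : realType) (n N : nat) (Om : set (vecn R n)) (u : vecn R n -> vecN R N).

Definition T2 := (vecn R n * vecN R N * matNn R n N * tenN R n N)%type.
Definition D2 (q : T2) := Om q.1.1.1 /\ symX q.2.
Definition dd2 (p q : T2) := dist2 p.1.1.1 p.1.1.2 p.1.2 p.2 q.1.1.1 q.1.1.2 q.1.2 q.2.
Definition G2 (F : F2type R n N) (q : T2) := F q.1.1.1 q.1.1.2 q.1.2 q.2.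

Definition T1 := (vecn R n * vecN R N * matNn R n N)%type.
Definition D1 (q : T1) := Om q.1.1.
Definition dd1 (p q : T1) := dist1 p.1.1 p.1.2 p.2 q.1.1 q.1.2 q.2.
Definition G1 (F : F1type R n N) (q : T1) := F q.1.1 q.1.2 q.2.

Lemma env2_genv F xi x r P X :
  env2 Om F xi x r P X = genv D2 dd2 (G2 F) xi (x, r, P, X).
Proof.
rewrite /env2 /genv; congr ereal_inf; apply: eq_imagel => eps _.
congr ereal_sup; apply/seteqP; split => z /=.
- by move=> [y [s [Q [Y [Omy [sy [dy ->]]]]]]]; exists (y, s, Q, Y).
- by move=> [[[[y s] Q] Y] [[Omy sy] [dy ->]]]; exists y, s, Q, Y.
Qed.

Lemma env1_genv F xi x r P :
  env1 Om F xi x r P = genv D1 dd1 (G1 F) xi (x, r, P).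
Proof.
rewrite /env1 /genv; congr ereal_inf; apply: eq_imagel => eps _.
congr ereal_sup; apply/seteqP; split => z /=.
- by move=> [y [s [Q [Omy [dy ->]]]]]; exists (y, s, Q).
- by move=> [[[y s] Q] [Omy [dy ->]]]; exists y, s, Q.
Qed.

Lemma dd2_tri p q r a : dd2 p q <= a -> dd2 q r <= a -> dd2 p r <= 2 * a.
Proof.
case: p => [[[x1 r1] P1] X1]; case: q => [[[x2 r2] P2] X2]; case: r => [[[x3 r3] P3] X3].
rewrite /dd2 /dist2 /= => h1 h2; apply: (sqrt_quasi _ _ _ h1 h2).
- by rewrite !addr_ge0 ?sqv_ge0 ?sqm_ge0 ?sqt_ge0.
- by rewrite !addr_ge0 ?sqv_ge0 ?sqm_ge0 ?sqt_ge0.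
- have := sqv_tri x1 x2 x3; have := sqv_tri r1 r2 r3; have := sqm_tri P1 P2 P3;
  have := sqt_tri X1 X2 X3; lra.
Qed.

Lemma dd1_tri p q r a : dd1 p q <= a -> dd1 q r <= a -> dd1 p r <= 2 * a.
Proof.
case: p => [[x1 r1] P1]; case: q => [[x2 r2] P2]; case: r => [[x3 r3] P3].
rewrite /dd1 /dist1 /= => h1 h2; apply: (sqrt_quasi _ _ _ h1 h2).
- by rewrite !addr_ge0 ?sqv_ge0 ?sqm_ge0.
- by rewrite !addr_ge0 ?sqv_ge0 ?sqm_ge0.
- have := sqv_tri x1 x2 x3; have := sqv_tri r1 r2 r3; have := sqm_tri P1 P2 P3; lra.
Qed.

Lemma dd2_0 p : dd2 p p = 0.
Proof. by rewrite /dd2 /dist2 !sqv0 sqm0 sqt0 !addr0 sqrtr0. Qed.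
Lemma dd1_0 p : dd1 p p = 0.
Proof. by rewrite /dd1 /dist1 !sqv0 sqm0 !addr0 sqrtr0. Qed.

Lemma symX_lim (Xs : nat -> tenN R n N) X :
  cvgt Xs X -> (forall m, symX (Xs m)) -> symX X.
Proof.
move=> cX sX a i j; apply/eqP; rewrite -subr_eq0; apply/eqP; apply: zero_small => e e0.
have e2 : 0 < e / 2 by rewrite divr_gt0.
have [K HK] := cX _ e2.
have h := HK K (leqnn K).
have h1 := le_lt_trans (coordt_le _ a i j) h.
have h2 := le_lt_trans (coordt_le _ a j i) h.
move: h1 h2; rewrite /tsub !ltr_norml => /andP [h1 h1'] /andP [h2 h2'].
have hs : Xs K a i j = Xs K a j i := sX K a i j.
apply/andP; split; lra.
Qed.

Hypothesis cu : cont_on Om u.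

Lemma conv2 x xs Ps Xs P X : Om x -> (forall m, Om (xs m)) ->
  cvgv xs x -> cvgm Ps P -> cvgt Xs X ->
  forall e, 0 < e -> exists K, forall m, (K <= m)%N ->
    dd2 (x, u x, P, X) (xs m, u (xs m), Ps m, Xs m) <= e.
Proof.
move=> Omx Oms cx cP cX e e0.
have e2 : 0 < e / 2 by rewrite divr_gt0.
have [d [d0 Hd]] := cu Omx e2.
have md : 0 < Num.min d (e / 2) by rewrite lt_min d0 e2.
have [K1 H1] := cx _ md; have [K3 H3] := cP _ e2; have [K4 H4] := cX _ e2.
exists (maxn K1 (maxn K3 K4)) => m; rewrite !geq_max => /andP [k1 /andP [k3 k4]].
apply: ltW; rewrite /dd2 /dist2 /=.
have -> : e = 2 * (e / 2) by rewrite mulrC divfK.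
have hx := H1 m k1; rewrite lt_min in hx; case/andP: hx => hxd hxe.
apply: sqrt_small4; rewrite ?sqv_ge0 ?sqm_ge0 ?sqt_ge0 //.
- by rewrite sqv_sym.
- by rewrite sqv_sym; apply: Hd.
- by rewrite sqm_sym; apply: H3.
- by rewrite sqt_sym; apply: H4.
Qed.

Lemma conv1 x xs Ps P : Om x -> (forall m, Om (xs m)) ->
  cvgv xs x -> cvgm Ps P ->
  forall e, 0 < e -> exists K, forall m, (K <= m)%N ->
    dd1 (x, u x, P) (xs m, u (xs m), Ps m) <= e.
Proof.
move=> Omx Oms cx cP e e0.
have e2 : 0 < e / 2 by rewrite divr_gt0.
have [d [d0 Hd]] := cu Omx e2.
have md : 0 < Num.min d (e / 2) by rewrite lt_min d0 e2.
have [K1 H1] := cx _ md; have [K3 H3] := cP _ e2.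
exists (maxn K1 K3) => m; rewrite !geq_max => /andP [k1 k3].
apply: ltW; rewrite /dd1 /dist1 /=.
have -> : e = 2 * (e / 2) by rewrite mulrC divfK.
have hx := H1 m k1; rewrite lt_min in hx; case/andP: hx => hxd hxe.
apply: sqrt_small3; rewrite ?sqv_ge0 ?sqm_ge0 //.
- by rewrite sqv_sym.
- by rewrite sqv_sym; apply: Hd.
- by rewrite sqm_sym; apply: H3.
Qed.

Lemma part2 (F : F2type R n N) : loc_bdd2 Om F ->
  (contact_sol2 Om u F <->
        (forall x xi P X, Om x -> unit_sphere xi -> J2 Om u xi x P X ->
           (0 <= env2 Om F xi x (u x) P X)%E)).
Proof.
move=> Hl; split.
- move=> H x xi P X Omx un hJ; apply: H => //.
  exists (fun _ => xi), (fun _ => x), (fun _ => P), (fun _ => X); split => //.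
  split; [|split; [|split]] => e e0; exists 0%N => m _;
    by rewrite /nrmv /nrmm /nrmt ?sqv0 ?sqm0 ?sqt0 sqrtr0.
- move=> H x xi P X Omx un [xis [xs [Ps [Xs [Hm [c1 [c2 [c3 c4]]]]]]]].
  have sX : symX X := symX_lim c4 (fun m => (Hm m).2.2.1).
  rewrite env2_genv.
  apply: (@genv_usc _ _ _ _ _ _ _ _ _ (fun m => (xs m, u (xs m), Ps m, Xs m)) dd2_tri _ c1).
  + have [d [M [d0 HM]]] := Hl x (u x) P X Omx sX.
    exists d, M; split => // -[[[y s] Q] Y] [Omy sy] dq; exact: HM.
  + exact: conv2 Omx (fun m => (Hm m).2.1) c2 c3 c4.
  + move=> m; rewrite -env2_genv; have [um [Om_m Jm]] := Hm m; exact: H.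
Qed.

Lemma part1 (F : F1type R n N) : loc_bdd1 Om F ->
  (contact_sol1 Om u F <->
        (forall x xi P, Om x -> unit_sphere xi -> J1 Om u xi x P ->
           (0 <= env1 Om F xi x (u x) P)%E)).
Proof.
move=> Hl; split.
- move=> H x xi P Omx un hJ; apply: H => //.
  exists (fun _ => xi), (fun _ => x), (fun _ => P); split => //.
  split; [|split] => e e0; exists 0%N => m _;
    by rewrite /nrmv /nrmm ?sqv0 ?sqm0 sqrtr0.
- move=> H x xi P Omx un [xis [xs [Ps [Hm [c1 [c2 c3]]]]]].
  rewrite env1_genv.
  apply: (@genv_usc _ _ _ _ _ _ _ _ _ (fun m => (xs m, u (xs m), Ps m)) dd1_tri _ c1).
  + have [d [M [d0 HM]]] := Hl x (u x) P Omx.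
    exists d, M; split => // -[[y s] Q] Omy dq; exact: HM.
  + exact: conv1 Omx (fun m => (Hm m).2.1) c2 c3.
  + move=> m; rewrite -env1_genv; have [um [Om_m Jm]] := Hm m; exact: H.
Qed.

End Spec.

Theorem lemma12 (R : realType) (n N : nat) (Om : set (vecn R n))
    (u : vecn R n -> vecN R N) :
  open_set Om -> cont_on Om u ->
  (forall F : F2type R n N, loc_bdd2 Om F ->
     (contact_sol2 Om u F <->
        (forall x xi P X, Om x -> unit_sphere xi -> J2 Om u xi x P X ->
           (0 <= env2 Om F xi x (u x) P X)%E)) /\
     (cont2 Om F ->
       (contact_sol2 Om u F <->
        (forall x xi P X, Om x -> unit_sphere xi -> J2 Om u xi x P X ->
           0 <= dot xi (F x (u x) P X))))) /\
  (forall F : F1type R n N, loc_bdd1 Om F ->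
     (contact_sol1 Om u F <->
        (forall x xi P, Om x -> unit_sphere xi -> J1 Om u xi x P ->
           (0 <= env1 Om F xi x (u x) P)%E)) /\
     (cont1 Om F ->
       (contact_sol1 Om u F <->
        (forall x xi P, Om x -> unit_sphere xi -> J1 Om u xi x P ->
           0 <= dot xi (F x (u x) P))))).
Proof.
move=> _ cu; split.
- move=> F Hl; split; first exact: (@part2 R n N Om u cu F Hl).
  move=> Hc; apply: iff_trans (part2 cu Hl) _.
  split => H x xi P X Omx un hJ; have [sX _] := hJ.
  + have Hc' : forall e, 0 < e -> exists d, 0 < d /\ forall q, D2 Om q ->
        dd2 (x, u x, P, X) q < d ->
        nrmv (vsub (G2 F q) (G2 F (x, u x, P, X))) < e.
      move=> e e0; have [d [d0 Hd]] := Hc x (u x) P X Omx sX e e0.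
      by exists d; split => // -[[[y s] Q] Y] [Omy sy] dq; exact: Hd.
    have := H x xi P X Omx un hJ; rewrite env2_genv.
    by move/(genv_cont un (conj Omx sX : D2 Om (x, u x, P, X)) (dd2_0 _) Hc').
  + have Hc' : forall e, 0 < e -> exists d, 0 < d /\ forall q, D2 Om q ->
        dd2 (x, u x, P, X) q < d ->
        nrmv (vsub (G2 F q) (G2 F (x, u x, P, X))) < e.
      move=> e e0; have [d [d0 Hd]] := Hc x (u x) P X Omx sX e e0.
      by exists d; split => // -[[[y s] Q] Y] [Omy sy] dq; exact: Hd.
    rewrite env2_genv.
    apply/(genv_cont un (conj Omx sX : D2 Om (x, u x, P, X)) (dd2_0 _) Hc').
    exact: H.
- move=> F Hl; split; first exact: (@part1 R n N Om u cu F Hl).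
  move=> Hc; apply: iff_trans (part1 cu Hl) _.
  split => H x xi P Omx un hJ.
  + have Hc' : forall e, 0 < e -> exists d, 0 < d /\ forall q, D1 Om q ->
        dd1 (x, u x, P) q < d ->
        nrmv (vsub (G1 F q) (G1 F (x, u x, P))) < e.
      move=> e e0; have [d [d0 Hd]] := Hc x (u x) P Omx e e0.
      by exists d; split => // -[[y s] Q] Omy dq; exact: Hd.
    have := H x xi P Omx un hJ; rewrite env1_genv.
    by move/(genv_cont un (Omx : D1 Om (x, u x, P)) (dd1_0 _) Hc').
  + have Hc' : forall e, 0 < e -> exists d, 0 < d /\ forall q, D1 Om q ->
        dd1 (x, u x, P) q < d ->
        nrmv (vsub (G1 F q) (G1 F (x, u x, P))) < e.
      move=> e e0; have [d [d0 Hd]] := Hc x (u x) P Omx e e0.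
      by exists d; split => // -[[y s] Q] Omy dq; exact: Hd.
    rewrite env1_genv.
    apply/(genv_cont un (Omx : D1 Om (x, u x, P)) (dd1_0 _) Hc').
    exact: H.
Qed.
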